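(* For every $\varepsilon>0$ there exist a positive integer $n$ and a joint probability distribution of the pair (principal's utility $x$, agent's utility $y$) on $\mathbb{R}_{\ge0}^2$ such that, in the distributional delegation model with $n$ samples, for every mechanism $M$ and every best response $\sigma$ of the agent to $M$, the principal's expected utility is less than $\left(\frac12+\varepsilon\right)\mathbb{E}[x_*]$, where $x_*=\max\{x(\omega_1),\ldots,x(\omega_n)\}$ for $n$ i.i.d. samples $\omega_1,\ldots,\omega_n$.
   Context: Distributional model: $\Omega$ is a probability space with probability measure $\mu$ (here $\Omega=\mathbb{R}_{\ge0}^2$ with the given distribution, and $x,y$ are the coordinate functions). The principal's utility is $x:\Omega\to\mathbb{R}_{\ge0}$ and the agent's utility is $y:\Omega\to\mathbb{R}_{\ge0}$. Let $\Omega_+=\Omega\cup\{\bot\}$, where $\bot$ is the null outcome with $x(\bot)=y(\bot)=0$. The agent draws $n$ i.i.d. samples $\omega_1,\ldots,\omega_n$ from $\mu$; the principal cannot observe them. A mechanism $M=(\Sigma,g)$ consists of a signal set $\Sigma$ and a map $g:\Sigma\to\Omega_+$. An agent strategy is a map $\sigma$ from finite sequences of elements of $\Omega$ to $\Sigma$. If the agent observes $\omega_1,\ldots,\omega_n$ and the outcome is $\omega=g(\sigma(\omega_1,\ldots,\omega_n))$, then the utilities are $(x(\omega),y(\omega))$ if $\omega\in\{\omega_1,\ldots,\omega_n,\bot\}$, and otherwise the principal gets $0$ and the agent gets $-1$. A best response is a strategy that, for every sample sequence, maximizes the agent's utility over all signals in $\Sigma$. *)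

(* Defs.v *)
From HB Require Import structures.
From mathcomp Require Import all_boot all_order all_algebra.
From mathcomp Require Import reals.
Set Implicit Arguments. Unset Strict Implicit. Unset Printing Implicit Defensive.
Import Order.TTheory GRing.Theory Num.Theory.
Local Open Scope ring_scope.

(* A (finitely supported) joint distribution of (x, y) on R_{>=0}^2:
   atoms fd_pt i with probabilities fd_w i. *)
Record fdist (R : realType) := FDist {
  fd_size : nat;
  fd_pt : 'I_fd_size -> R * R;
  fd_w : 'I_fd_size -> R }.
Arguments fd_size {R} f.
Arguments fd_pt {R} f _.
Arguments fd_w {R} f _.

Definition valid_fdist (R : realType) (d : fdist R) : Prop :=
  (forall i, 0 <= fd_w d i) /\ (\sum_i fd_w d i = 1) /\
  (forall i, 0 <= (fd_pt d i).1 /\ 0 <= (fd_pt d i).2).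

Definition expect_iid (R : realType) (d : fdist R) (n : nat)
    (F : seq (R * R) -> R) : R :=
  \sum_(t : n.-tuple 'I_(fd_size d))
     (\prod_(j < n) fd_w d (tnth t j)) * F [seq fd_pt d i | i <- t].

(* Outcomes are elements of Omega_+ = Omega \cup {bot}; bot is None. *)
Definition agent_util (R : realType) (ws : seq (R * R)) (o : option (R * R)) : R :=
  match o with
  | None => 0
  | Some a => if a \in ws then a.2 else -1
  end.

Definition principal_util (R : realType) (ws : seq (R * R)) (o : option (R * R)) : R :=
  match o with
  | None => 0
  | Some a => if a \in ws then a.1 else 0
  end.

Definition best_response (R : realType) (Sig : Type) (g : Sig -> option (R * R))
    (sigma : seq (R * R) -> Sig) : Prop :=
  forall (ws : seq (R * R)) (s : Sig),
    agent_util ws (g s) <= agent_util ws (g (sigma ws)).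

Definition xstar (R : realType) (ws : seq (R * R)) : R :=
  \big[Num.max/0]_(w <- ws) w.1.

(* Main.v *)
From Stdlib Require Import Classical.
Require Import Defs.
From HB Require Import structures.
From mathcomp Require Import all_boot all_order all_algebra.
From mathcomp Require Import reals.
From mathcomp Require Import ring lra.
Import Order.TTheory GRing.Theory Num.Theory.
Local Open Scope ring_scope.

Lemma expect2 (R : realType) (d : fdist R) F :
  expect_iid d 2 F = \sum_(i : 'I_(fd_size d)) \sum_(j : 'I_(fd_size d))
     (fd_w d i * fd_w d j) * F [:: fd_pt d i; fd_pt d j].
Proof.
rewrite /expect_iid pair_big /=.
rewrite (reindex (fun p : 'I_(fd_size d) * 'I_(fd_size d) => [tuple p.1; p.2])) /=.
  apply: eq_bigr => [[i j]] _ /=.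
  by rewrite !big_ord_recl big_ord0 mulr1.
exists (fun t => (tnth t ord0, tnth t (lift ord0 ord0))) => [[i j]|t] _ //=.
apply: eq_from_tnth => k; case: k => [[|[|k]] Hk] //=.
- by rewrite [LHS]/tnth /=; congr tnth; apply: val_inj.
- by rewrite [LHS]/tnth /=; congr tnth; apply: val_inj.
Qed.

Lemma pu_le (R : realType) (ws : seq (R * R)) o c :
  (forall w, w \in ws -> w.1 <= c) -> 0 <= c -> principal_util ws o <= c.
Proof.
move=> Hw c0; case: o => [z|] /=; last by []. case: ifP => [zin|_] //; exact: Hw.
Qed.

Lemma pu_acc (R : realType) (ws : seq (R * R)) o :
  2 <= agent_util ws o -> (forall w, w \in ws -> 2 <= w.2 -> w.1 <= 1) ->
  principal_util ws o <= 1.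
Proof.
case: o => [w|] /=; last by move=> h; exfalso; move: h; apply/negP; rewrite -ltNge; lra.
case: ifP => [win h H|_]; last by move=> h; exfalso; move: h; apply/negP; rewrite -ltNge; lra.
exact: H.
Qed.

Theorem mainTheorem4 (R : realType) (eps : R) (heps : 0 < eps) :
  exists (n : nat) (d : fdist R),
    (0 < n)%N /\ valid_fdist d /\
    forall (Sig : Type) (g : Sig -> option (R * R)) (sigma : seq (R * R) -> Sig),
      best_response g sigma ->
      expect_iid d n (fun ws => principal_util ws (g (sigma ws)))
        < (2^-1 + eps) * expect_iid d n (@xstar R).
Proof.
pose t : R := Num.min eps 1 / 4.
have hm1 : Num.min eps 1 <= 1 by rewrite ge_min lexx orbT.
have hme : Num.min eps 1 <= eps by rewrite ge_min lexx.
have hm0 : 0 < Num.min eps 1 by rewrite lt_min heps ltr01.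
have t0 : 0 < t by rewrite /t; lra.
have t14 : t <= 1/4 by rewrite /t; lra.
have te : t <= eps/4 by rewrite /t; lra.
clearbody t.
pose H : R := (2 * t)^-1.
have Ht : H * t = 1/2 by rewrite /H; field; rewrite gt_eqF.
have H1 : 1 <= H.
  rewrite /H -[leRHS]mul1r ler_pdivlMr; last by rewrite mulr_gt0.
  lra.
pose a : R * R := (1, 2). pose b : R * R := (H, 1).
pose d := @FDist R 2 (fun i => if val i == 0%N then a else b)
                     (fun i => if val i == 0%N then 1 - t else t).
exists 2%N, d; split => //; split.
  split; [|split].
  - by case=> [[|i] Hi] /=; lra.
  - by rewrite big_ord_recl big_ord1 /=; lra.
  - by case=> [[|i] Hi] /=; lra.
move=> Sig g sigma BR.
rewrite !expect2 !big_ord_recl !big_ord0 /= !addr0.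
have xab : forall p q : R * R, xstar [:: p; q] = Num.max p.1 (Num.max q.1 0).
  by move=> p q; rewrite /xstar !big_cons big_nil.
rewrite !xab /= (@max_l _ _ 1 0) ?ler01 // (@max_l _ _ H 0) ?(le_trans ler01 H1) //.
rewrite (@max_l _ _ 1 1) // (@max_l _ _ H 1) // (@max_r _ _ 1 H) // (@max_l _ _ H H) //.
have -> : (1 - t) * (1 - t) * 1 + (1 - t) * t * H + (t * (1 - t) * H + t * t * H)
    = 2 - 5/2 * t + t ^+ 2.
  by rewrite /H; field; rewrite gt_eqF.
have w1 : 0 <= (1 - t) * (1 - t) by apply: mulr_ge0; lra.
have w2 : 0 <= (1 - t) * t by apply: mulr_ge0; lra.
have w3 : 0 <= t * (1 - t) by apply: mulr_ge0; lra.
have w4 : 0 <= t * t by apply: mulr_ge0; lra.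
have H0 : 0 <= H by lra.
have inab : forall w, w \in [:: a; b] -> w.1 <= H.
  by move=> w; rewrite !inE => /orP[] /eqP -> /=.
have inba : forall w, w \in [:: b; a] -> w.1 <= H.
  by move=> w; rewrite !inE => /orP[] /eqP -> /=.
have inbb : forall w, w \in [:: b; b] -> w.1 <= H.
  by move=> w; rewrite !inE => /orP[] /eqP -> /=.
have inaa : forall w, w \in [:: a; a] -> w.1 <= 1.
  by move=> w; rewrite !inE => /orP[] /eqP -> /=.
have u4 := ler_wpM2l w4 (@pu_le R _ (g (sigma [:: b; b])) _ inbb H0).
have fin : forall L : R, L <= 1 - t ^+ 2 + t / 2 ->
    L < (2^-1 + eps) * (2 - 5/2 * t + t ^+ 2).
  move=> L hL; apply: (le_lt_trans hL).
  have E0 : 0 <= 2 - 5/2 * t + t ^+ 2 by nra.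
  have h1 : (4 * t) * (2 - 5/2 * t + t ^+ 2) <= eps * (2 - 5/2 * t + t ^+ 2).
    by apply: ler_wpM2r => //; lra.
  have h2 : 0 < t * (25/4 - 17/2 * t + 4 * t ^+ 2) by apply: mulr_gt0 => //; nra.
  rewrite mulrDl; nra.
have [[s0 hs0]|nacc] := Classical_Prop.classic (exists s, g s = Some a); last first.
  have u1 : principal_util [:: a; a] (g (sigma [:: a; a])) <= 0.
    case E: (g (sigma [:: a; a])) => [z|] //=.
    case: ifP => // zin; exfalso; apply: nacc; exists (sigma [:: a; a]).
    by rewrite E; move: zin; rewrite !inE orbb => /eqP ->.
  have u1' := ler_wpM2l w1 u1.
  have u2 := ler_wpM2l w2 (@pu_le R _ (g (sigma [:: a; b])) _ inab H0).
  have u3 := ler_wpM2l w3 (@pu_le R _ (g (sigma [:: b; a])) _ inba H0).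
  apply: fin.
  have e : (1 - t) * t * H + (t * (1 - t) * H + t * t * H) = 1 - t / 2.
    by rewrite /H; field; rewrite gt_eqF.
  rewrite mulr0 in u1'; lra.
have u1 := ler_wpM2l w1 (@pu_le R _ (g (sigma [:: a; a])) _ inaa ler01).
have u2 : principal_util [:: a; b] (g (sigma [:: a; b])) <= 1.
  apply: pu_acc; first by have := BR [:: a; b] s0; rewrite hs0 /= inE eqxx.
  move=> w; rewrite !inE => /orP[] /eqP -> //= h; exfalso; move: h; apply/negP; rewrite -ltNge; lra.
have u3 : principal_util [:: b; a] (g (sigma [:: b; a])) <= 1.
  apply: pu_acc; first by have := BR [:: b; a] s0; rewrite hs0 /= !inE eqxx orbT.
  move=> w; rewrite !inE => /orP[] /eqP -> //= h; exfalso; move: h; apply/negP; rewrite -ltNge; lra.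
have u2' := ler_wpM2l w2 u2.
have u3' := ler_wpM2l w3 u3.
apply: fin.
have e : (1 - t) * (1 - t) * 1 + (1 - t) * t * 1 + (t * (1 - t) * 1 + t * t * H) = 1 - t ^+ 2 + t / 2.
  by rewrite /H; field; rewrite gt_eqF.
lra.
Qed.
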